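(* For $m=2,4,6$ let $\mathbb Z_m\subset SL_2(\mathbb Z)$ be the cyclic subgroup generated respectively by $\begin{pmatrix}-1&0\\0&-1\end{pmatrix}$, $\begin{pmatrix}0&-1\\1&0\end{pmatrix}$, $\begin{pmatrix}0&1\\-1&1\end{pmatrix}$, and let $G_m=\mathbb Z_m\ltimes\mathbb Z^2\subset\Gamma^J$ be the subgroup of pairs $(M,X)$ with $M\in\mathbb Z_m$, $X\in\mathbb Z^2$. Then $G_2\subset G_4$ and $G_2\subset G_6$, and the Jacobi group $\Gamma^J$ is isomorphic to the amalgamated free product $G_4 *_{G_2} G_6$.
   Context: The full Jacobi group is $\Gamma^J=SL_2(\mathbb Z)\ltimes\mathbb Z^2$, the set of pairs $(M,X)$ with $M\in SL_2(\mathbb Z)$, $X\in\mathbb Z^2$ a row vector, with multiplication $(M,X)(M',X')=(MM',XM'+X')$. *)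

(* Defs.v *)
From HB Require Import structures.
From mathcomp Require Import all_boot all_order all_algebra.
Set Implicit Arguments. Unset Strict Implicit. Unset Printing Implicit Defensive.
Import Order.TTheory GRing.Theory Num.Theory.
Local Open Scope ring_scope.

Record grp := Grp {
  gcar :> Type;
  gmul : gcar -> gcar -> gcar;
  gone : gcar;
  ginv : gcar -> gcar;
  gmulA : forall x y z, gmul x (gmul y z) = gmul (gmul x y) z;
  gmul1 : forall x, gmul x gone = x;
  g1mul : forall x, gmul gone x = x;
  gmulV : forall x, gmul x (ginv x) = gone;
  gVmul : forall x, gmul (ginv x) x = gone
}.

Record jac := Jac { jM : 'M[int]_2; jX : 'rV[int]_2; jdet : \det jM == 1 }.

Lemma jmul_det (a b : jac) : \det (jM a *m jM b) == 1.
Proof. by rewrite det_mulmx (eqP (jdet a)) (eqP (jdet b)) mulr1. Qed.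

Definition jmul (a b : jac) : jac :=
  @Jac (jM a *m jM b) (jX a *m jM b + jX b) (jmul_det a b).

Definition mx2 (a b c d : int) : 'M[int]_2 :=
  \matrix_(i < 2, j < 2)
    if i == ord0 then (if j == ord0 then a else b) else (if j == ord0 then c else d).

Definition gen2 : 'M[int]_2 := mx2 (-1) 0 0 (-1).
Definition gen4 : 'M[int]_2 := mx2 0 (-1) 1 0.
Definition gen6 : 'M[int]_2 := mx2 0 1 (-1) 1.

(* the cyclic subgroup of SL_2(Z) generated by g (g has finite order here,
   so nonnegative powers suffice) *)
Definition cyc (g : 'M[int]_2) (M : 'M[int]_2) : Prop := exists k : nat, M = g ^+ k.

Definition Gm (g : 'M[int]_2) (x : jac) : Prop := cyc g (jM x).
Definition G2 := Gm gen2.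
Definition G4 := Gm gen4.
Definition G6 := Gm gen6.

Definition homOnJ (A : jac -> Prop) (H : grp) (f : jac -> H) : Prop :=
  forall x y, A x -> A y -> f (jmul x y) = gmul (f x) (f y).

Definition homOnJJ (A : jac -> Prop) (f : jac -> jac) : Prop :=
  forall x y, A x -> A y -> f (jmul x y) = jmul (f x) (f y).

(* Gamma^J (with j4 : G4 -> Gamma^J, j6 : G6 -> Gamma^J agreeing on G2) is the
   amalgamated free product G4 *_{G2} G6, i.e. the pushout of
   G4 <- G2 -> G6 (inclusions) in the category of groups. *)
Definition is_amalgam (j4 j6 : jac -> jac) : Prop :=
  homOnJJ G4 j4 /\ homOnJJ G6 j6 /\ (forall x, G2 x -> j4 x = j6 x) /\
  forall (H : grp) (f4 f6 : jac -> H),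
    homOnJ G4 f4 -> homOnJ G6 f6 -> (forall x, G2 x -> f4 x = f6 x) ->
    (exists F : jac -> H, homOnJ (fun _ => True) F /\
        (forall x, G4 x -> F (j4 x) = f4 x) /\ (forall x, G6 x -> F (j6 x) = f6 x)) /\
    (forall F F' : jac -> H,
        homOnJ (fun _ => True) F ->
        (forall x, G4 x -> F (j4 x) = f4 x) -> (forall x, G6 x -> F (j6 x) = f6 x) ->
        homOnJ (fun _ => True) F' ->
        (forall x, G4 x -> F' (j4 x) = f4 x) -> (forall x, G6 x -> F' (j6 x) = f6 x) ->
        forall z, F z = F' z).

(* Main.v *)
Require Import Defs.
From mathcomp Require Import all_boot all_order all_algebra.
From mathcomp Require Import zify ring lra.
From Stdlib Require Import ClassicalEpsilon.
Set Implicit Arguments. Unset Strict Implicit. Unset Printing Implicit Defensive.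
Import Order.TTheory GRing.Theory Num.Theory.
Local Open Scope ring_scope.

Definition i1 : 'I_2 := ord_max.
Lemma sum2 (F : 'I_2 -> int) : \sum_(j < 2) F j = F ord0 + F i1.
Proof. rewrite !big_ord_recl big_ord0 addr0. by congr (_ + F _); apply/val_inj. Qed.
Lemma det22 (A : 'M[int]_2) : \det A = A ord0 ord0 * A i1 i1 - A ord0 i1 * A i1 ord0.
Proof.
rewrite (expand_det_row _ ord0) sum2 /cofactor !det_mx11 !mxE /=.
have -> : lift ord0 ord0 = i1 :> 'I_2 by apply/val_inj.
have -> : lift i1 ord0 = ord0 :> 'I_2 by apply/val_inj.
rewrite /= expr0 expr1. ring.
Qed.

Inductive m4 := Q of int & int & int & int.
Definition mul4 (u v : m4) : m4 :=
  let: Q a b c d := u in let: Q a' b' c' d' := v in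
  Q (a*a'+b*c') (a*b'+b*d') (c*a'+d*c') (c*b'+d*d').
Definition det4 (u : m4) : int := let: Q a b c d := u in a*d - b*c.
Definition ofM (A : 'M[int]_2) : m4 := Q (A ord0 ord0) (A ord0 i1) (A i1 ord0) (A i1 i1).

Lemma ord2P (i : 'I_2) : i = ord0 \/ i = i1.
Proof. case: i => [[|[|//]]] Hi; [left|right]; exact/val_inj. Qed.

Lemma ofM_inj (A B : 'M[int]_2) : ofM A = ofM B -> A = B.
Proof.
case=> h1 h2 h3 h4; apply/matrixP => i j.
by case: (ord2P i) => ->; case: (ord2P j) => ->.
Qed.

Lemma ofM_mul (A B : 'M[int]_2) : ofM (A *m B) = mul4 (ofM A) (ofM B).
Proof. by rewrite /ofM /= !mxE !sum2. Qed.

Lemma ofM_mulr (A B : 'M[int]_2) : ofM (A * B) = mul4 (ofM A) (ofM B).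
Proof. by rewrite -mulmxE ofM_mul. Qed.

Lemma ofM_det (A : 'M[int]_2) : \det A = det4 (ofM A).
Proof. by rewrite det22. Qed.

Lemma ofM_mx2 a b c d : ofM (mx2 a b c d) = Q a b c d.
Proof. by rewrite /ofM !mxE. Qed.

Definition I4 := Q 1 0 0 1.
Lemma ofM_1 : ofM 1 = I4.
Proof. by rewrite /ofM !mxE. Qed.

Lemma mul4A u v w : mul4 u (mul4 v w) = mul4 (mul4 u v) w.
Proof. case: u v w => [a b c d] [a' b' c' d'] [x y z t] /=; congr Q; ring. Qed.
Lemma mul1_4 u : mul4 I4 u = u.
Proof. case: u => a b c d /=; congr Q; ring. Qed.
Lemma mul4_1 u : mul4 u I4 = u.
Proof. case: u => a b c d /=; congr Q; ring. Qed.
Lemma det4M u v : det4 (mul4 u v) = det4 u * det4 v.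
Proof. case: u v => [a b c d] [a' b' c' d'] /=; ring. Qed.

Fixpoint pow4 u k := if k is k'.+1 then mul4 u (pow4 u k') else I4.
Lemma ofM_exp (A : 'M[int]_2) k : ofM (A ^+ k) = pow4 (ofM A) k.
Proof. elim: k => [|k IH]; first by rewrite expr0 ofM_1. by rewrite exprS ofM_mulr IH. Qed.

Definition S4 := Q 0 (-1) 1 0.
Definition R4 := Q 0 1 (-1) 1.
Definition L4 := Q 1 0 1 1.
Definition T4 := Q 1 1 0 1.
Definition mI4 := Q (-1) 0 0 (-1).
Lemma ofM_gen2 : ofM gen2 = mI4. Proof. exact: ofM_mx2. Qed.
Lemma ofM_gen4 : ofM gen4 = S4. Proof. exact: ofM_mx2. Qed.
Lemma ofM_gen6 : ofM gen6 = R4. Proof. exact: ofM_mx2. Qed.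

Lemma gen2_4 : gen2 = gen4 ^+ 2.
Proof. by apply: ofM_inj; rewrite ofM_exp ofM_gen2 ofM_gen4. Qed.
Lemma gen2_6 : gen2 = gen6 ^+ 3.
Proof. by apply: ofM_inj; rewrite ofM_exp ofM_gen2 ofM_gen6. Qed.


Inductive B3 := B0 | B1 | B2.
Record nf := NF { ne : bool; nal : bool; nw : seq bool; nb : B3 }.

Definition Wm (w : seq bool) := foldr (fun x acc => mul4 (if x then L4 else T4) acc) I4 w.
Definition Ce (e : bool) := if e then mI4 else I4.
Definition Sa (a : bool) := if a then S4 else I4.
Definition Rb (b : B3) := match b with B0 => I4 | B1 => R4 | B2 => Q (-1) 1 (-1) 0 end.
Definition evalM (u : nf) :=
  mul4 (Ce (ne u)) (mul4 (Sa (nal u)) (mul4 (Wm (nw u)) (Rb (nb u)))).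

Definition actS (u : nf) : nf :=
  let: NF e al w b := u in if al then NF (~~ e) false w b else NF e true w b.
Definition actR (u : nf) : nf :=
  let: NF e al w b := u in
  if al then NF e false (true :: w) b else
  match w with
  | true :: w' => NF e false (false :: w') b
  | false :: w' => NF (~~ e) true w' b
  | [::] => match b with B0 => NF e false [::] B1 | B1 => NF e false [::] B2
                        | B2 => NF (~~ e) false [::] B0 end
  end.

Lemma evalM_actS u : evalM (actS u) = mul4 S4 (evalM u).
Proof.
case: u => e al w b.
case: e; case: al; case: b; rewrite /evalM /=; case: (Wm w) => x y z t /=; congr Q; ring.
Qed.

Lemma evalM_actR u : evalM (actR u) = mul4 R4 (evalM u).
Proof.
case: u => e al w b.
case: al.
  by case: e; case: b; rewrite /evalM /=; case: (Wm w) => x y z t /=; congr Q; ring.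
case: w => [|[] w].
  by case: e; case: b; rewrite /evalM /=; congr Q; ring.
all: by case: e; case: b; rewrite /evalM /=; case: (Wm w) => x y z t /=; congr Q; ring.
Qed.

Definition posm (q : m4) := let: Q a b c d := q in (1 <= a) && (1 <= d) && (0 <= b) && (0 <= c).
Lemma Wm_pos w : posm (Wm w).
Proof.
elim: w => [|x w IH] //=; move: IH; case: (Wm w) => a b c d /=; case: x => /=; lia.
Qed.

Lemma Wm_inj w w' : Wm w = Wm w' -> w = w'.
Proof.
elim: w w' => [|x w IH] [|y w'] //=.
- move: (Wm_pos w'); case: (Wm w') => a b c d; case: y => /= hp [] *; lia.
- move: (Wm_pos w); case: (Wm w) => a b c d; case: x => /= hp [] *; lia.
- move: (Wm_pos w) (Wm_pos w') (IH w').
  case: (Wm w) => a b c d; case: (Wm w') => a' b' c' d'.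
  case: x; case: y => /= hp hp' IH' [] *.
  + by rewrite IH' //; congr Q; lia.
  + lia.
  + lia.
  + by rewrite IH' //; congr Q; lia.
Qed.

Definition unif (x y : int) := ((0 <= x) && (0 <= y)) || ((x <= 0) && (y <= 0)).
Definition Uf (q : m4) := let: Q a b c d := q in unif a b && unif c d.

Lemma U0 e al w : Uf (evalM (NF e al w B0)).
Proof.
rewrite /evalM /=; move: (Wm_pos w); case: (Wm w) => a b c d.
case: e; case: al; rewrite /= /unif; lia.
Qed.
Lemma U1 e al w : ~~ Uf (evalM (NF e al w B1)).
Proof.
rewrite /evalM /=; move: (Wm_pos w); case: (Wm w) => a b c d.
case: e; case: al; rewrite /= /unif; lia.
Qed.
Lemma U2 e al w : ~~ Uf (evalM (NF e al w B2)).
Proof.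
rewrite /evalM /=; move: (Wm_pos w); case: (Wm w) => a b c d.
case: e; case: al; rewrite /= /unif; lia.
Qed.

Definition succB b := match b with B0 => B1 | B1 => B2 | B2 => B0 end.
Lemma evalM_R e al w b :
  mul4 (evalM (NF e al w b)) R4 =
  evalM (NF (if b is B2 then ~~ e else e) al w (succB b)).
Proof.
rewrite /evalM /=; case: (Wm w) => x y z t.
case: e; case: al; case: b => /=; congr Q; ring.
Qed.

Lemma nb_eq u v : evalM u = evalM v -> nb u = nb v.
Proof.
case: u v => e al w b [e' al' w' b'] /=.
have H01 : forall e al w e' al' w', evalM (NF e al w B0) <> evalM (NF e' al' w' B1).
  by move=> e1 a1 w1 e2 a2 w2 h; move: (U0 e1 a1 w1) (U1 e2 a2 w2); rewrite h => ->.
have H02 : forall e al w e' al' w', evalM (NF e al w B0) <> evalM (NF e' al' w' B2).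
  by move=> e1 a1 w1 e2 a2 w2 h; move: (U0 e1 a1 w1) (U2 e2 a2 w2); rewrite h => ->.
case: b; case: b' => // h;
  first [ by case: (H01 _ _ _ _ _ _ h) | by case: (H01 _ _ _ _ _ _ (esym h))
        | by case: (H02 _ _ _ _ _ _ h) | by case: (H02 _ _ _ _ _ _ (esym h))
        | have := congr1 (fun q => mul4 q R4) h; rewrite /= !evalM_R /= => h';
          first [ by case: (H02 _ _ _ _ _ _ h') | by case: (H02 _ _ _ _ _ _ (esym h')) ] ].
Qed.

Definition Rbinv (b : B3) := match b with B0 => I4 | B1 => Q 1 (-1) 1 0 | B2 => Q 0 (-1) 1 (-1) end.
Lemma Rb_inv b : mul4 (Rb b) (Rbinv b) = I4.
Proof. by case: b. Qed.

Lemma evalM_inj u v : evalM u = evalM v -> u = v.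
Proof.
move=> h; have hb := nb_eq h.
case: u v h hb => e al w b [e' al' w' b'] /= h hb; subst b'.
have h2 : mul4 (Ce e) (mul4 (Sa al) (Wm w)) = mul4 (Ce e') (mul4 (Sa al') (Wm w')).
  move: (congr1 (fun q => mul4 q (Rbinv b)) h); rewrite /evalM /=.
  by rewrite -!mul4A Rb_inv !mul4_1.
clear h; have : Wm w = Wm w' /\ e = e' /\ al = al'.
  move: h2 (Wm_pos w) (Wm_pos w'); case: (Wm w) => a b1 c d; case: (Wm w') => a' b1' c' d'.
  case: e; case: al; case: e'; case: al' => /= h3 p1 p2; case: h3 => q1 q2 q3 q4;
    (try by split; [congr Q; lia| split]); lia.
by case=> /Wm_inj -> [-> ->].
Qed.


Definition evalword (ws : seq bool) :=
  foldr (fun g acc => mul4 (if g then S4 else R4) acc) I4 ws.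
Definition inG q := exists ws, q = evalword ws.

Lemma inG_S q : inG q -> inG (mul4 S4 q).
Proof. by case=> ws ->; exists (true :: ws). Qed.
Lemma inG_R q : inG q -> inG (mul4 R4 q).
Proof. by case=> ws ->; exists (false :: ws). Qed.
Lemma inG_I : inG I4. Proof. by exists [::]. Qed.

Lemma inG_Sinv a b c d : inG (Q (-c) (-d) a b) -> inG (Q a b c d).
Proof.
move=> /inG_S/inG_S/inG_S; congr inG; rewrite /=; congr Q; ring.
Qed.
Lemma inG_T a b c d : inG (Q a b c d) -> inG (Q (a + c) (b + d) c d).
Proof.
move=> /inG_S/inG_R/inG_R; congr inG; rewrite /=; congr Q; ring.
Qed.
Lemma inG_Ti a b c d : inG (Q a b c d) -> inG (Q (a - c) (b - d) c d).
Proof.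
move=> /inG_R/inG_S; congr inG; rewrite /=; congr Q; ring.
Qed.

Lemma inG_Tn (n : nat) a b c d : inG (Q a b c d) ->
  inG (Q (a + n%:Z * c) (b + n%:Z * d) c d) /\ inG (Q (a - n%:Z * c) (b - n%:Z * d) c d).
Proof.
move=> h; elim: n => [|n [IH1 IH2]].
  by rewrite !mul0r addr0 subr0.
split.
  move: (inG_T IH1); congr inG; congr Q; rewrite intS; ring.
move: (inG_Ti IH2); congr inG; congr Q; rewrite intS; ring.
Qed.

Lemma inG_Tk (k : int) a b c d : inG (Q a b c d) ->
  inG (Q (a + k * c) (b + k * d) c d).
Proof.
move=> h; case: k => n.
  exact: (inG_Tn n h).1.
move: (inG_Tn n.+1 h).2; congr inG; congr Q; rewrite NegzE; ring.
Qed.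

Lemma unit_int (a d : int) : a * d = 1 -> (a = 1 /\ d = 1) \/ (a = -1 /\ d = -1).
Proof.
move=> h.
have : a = 1 \/ a = -1 \/ a = 0 \/ 2 <= a \/ a <= -2 by lia.
case=> [ha|[ha|[ha|[ha|ha]]]].
- by left; split=> //; move: h; rewrite ha mul1r.
- right; split=> //; move: h; rewrite ha mulN1r; lia.
- by move: h; rewrite ha mul0r.
- have : d <= 0 \/ 1 <= d by lia.
  case=> hd; [have : a * d <= 0 by rewrite pmulr_rle0; lia | have : 2 <= a * d by nia]; lia.
- have : d <= -1 \/ 0 <= d by lia.
  case=> hd; [have : 2 <= a * d by nia | have : a * d <= 0 by nia]; lia.
Qed.

Lemma inG_c0 a b d : a * d - b * 0 = 1 -> inG (Q a b 0 d).
Proof.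
rewrite mulr0 subr0 => /unit_int [[-> ->]|[-> ->]].
  move: (inG_Tk b inG_I); congr inG; rewrite /I4; congr Q; ring.
have hm : inG mI4 by move: (inG_S (inG_S inG_I)).
move: (inG_Tk (-b) hm); congr inG; rewrite /mI4; congr Q; ring.
Qed.

Lemma gen_aux n : forall a b c d, (absz c <= n)%N -> a * d - b * c = 1 -> inG (Q a b c d).
Proof.
elim: n => [|n IH] a b c d hc hdet.
  have c0 : c = 0 by lia.
  by subst c; apply: inG_c0.
have [c0|cn0] := eqVneq c 0.
  by subst c; apply: inG_c0.
set q := (a %/ c)%Z; set r := (a %% c)%Z.
have ea : a = q * c + r by rewrite /q /r -divz_eq.
have r0 : 0 <= r by apply: modz_ge0.
have rc : r < `|c| by apply: ltz_mod.
have h1 : inG (Q (- c) (- d) r (b - q * d)).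
  apply: IH; first by lia.
  rewrite -hdet ea; ring.
move: (inG_Tk q (inG_Sinv h1)); congr inG; congr Q; rewrite ?ea; ring.
Qed.

Lemma gen q : det4 q = 1 -> inG q.
Proof. case: q => a b c d /= h; exact: (@gen_aux (absz c)). Qed.

Lemma nf_exists ws : exists u, evalM u = evalword ws.
Proof.
elim: ws => [|g ws [u hu]] /=.
  by exists (NF false false [::] B0).
case: g.
  by exists (actS u); rewrite evalM_actS hu.
by exists (actR u); rewrite evalM_actR hu.
Qed.


Section GH.
Variable H : grp.
Local Notation "x ** y" := (gmul x y) (at level 40, left associativity).
Local Notation one := (gone H).
Variables s p : H.
Hypothesis hsp : s ** s = p ** p ** p.
Hypothesis hcc : s ** s ** (s ** s) = one.

Definition cH := s ** s.
Definition lH := p ** s.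
Definition tH := p ** p ** s.
Definition hW (w : seq bool) := foldr (fun x acc => (if x then lH else tH) ** acc) one w.
Definition cE (e : bool) := if e then cH else one.
Definition sA (a : bool) := if a then s else one.
Definition rB (b : B3) := match b with B0 => one | B1 => p | B2 => p ** p end.
Definition evalH (u : nf) := cE (ne u) ** (sA (nal u) ** (hW (nw u) ** rB (nb u))).

Lemma cHs : cH ** s = s ** cH.
Proof. by rewrite /cH -!gmulA. Qed.
Lemma cHp : cH ** p = p ** cH.
Proof. by rewrite /cH hsp -!gmulA. Qed.
Lemma cEs e : cE e ** s = s ** cE e.
Proof. case: e => /=; [exact: cHs | by rewrite g1mul gmul1]. Qed.
Lemma cEp e : cE e ** p = p ** cE e.
Proof. case: e => /=; [exact: cHp | by rewrite g1mul gmul1]. Qed.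
Lemma cEc e : cE e ** cH = cE (~~ e).
Proof. case: e => /=; [exact: hcc | by rewrite g1mul]. Qed.

Lemma evalH_actS u : evalH (actS u) = s ** evalH u.
Proof.
case: u => e al w b; case: al; rewrite /evalH /= ?g1mul !gmulA.
- by rewrite -cEs -(gmulA (cE e)) -/cH cEc.
- by rewrite cEs.
Qed.

Lemma evalH_actR u : evalH (actR u) = p ** evalH u.
Proof.
case: u => e al w b; case: al.
  by rewrite /evalH /= ?g1mul !gmulA cEp.
case: w => [|[] w].
- case: b; rewrite /evalH /= ?g1mul ?gmul1 ?g1mul ?gmulA ?cEp //.
  by rewrite -cEp -!gmulA (gmulA p p p) -hsp -/cH cEc.
- by rewrite /evalH /= ?g1mul ?gmulA -cEp.
- by rewrite /evalH /= ?g1mul ?gmulA -cEc /cH hsp !gmulA -cEp.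
Qed.

Lemma evalH_0 : evalH (NF false false [::] B0) = one.
Proof. by rewrite /evalH /= !g1mul. Qed.

End GH.


Lemma det1M : \det (1 : 'M[int]_2) == 1.
Proof. by rewrite det1. Qed.

Definition mkJ (M : 'M[int]_2) (X : 'rV[int]_2) : jac :=
  (if \det M == 1 as b return (\det M == 1) = b -> jac
   then fun h => @Jac M X h else fun _ => @Jac 1 X det1M) erefl.
Lemma mkJ_M M X : \det M = 1 -> jM (mkJ M X) = M.
Proof.
move=> h; rewrite /mkJ; move: (@erefl _ (\det M == 1)).
by case: {2 3}(\det M == 1) => //; rewrite h eqxx.
Qed.
Lemma mkJ_X M X : jX (mkJ M X) = X.
Proof. by rewrite /mkJ; move: (@erefl _ (\det M == 1)); case: {2 3}(\det M == 1). Qed.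

Lemma jac_eq (x y : jac) : jM x = jM y -> jX x = jX y -> x = y.
Proof.
case: x => M X h; case: y => M' X' h' /= e1 e2; subst.
by rewrite (eq_irrelevance h h').
Qed.

Definition toM (q : m4) : 'M[int]_2 := let: Q a b c d := q in mx2 a b c d.
Lemma ofM_toM q : ofM (toM q) = q.
Proof. by case: q => a b c d; rewrite /= ofM_mx2. Qed.
Lemma toM_ofM M : toM (ofM M) = M.
Proof. by apply: ofM_inj; rewrite ofM_toM. Qed.
Lemma toM_mul q r : toM (mul4 q r) = toM q *m toM r.
Proof. by apply: ofM_inj; rewrite ofM_mul !ofM_toM. Qed.
Lemma det_toM q : det4 q = 1 -> \det (toM q) = 1.
Proof. by move=> h; rewrite ofM_det ofM_toM. Qed.
Lemma det4_pow q k : det4 q = 1 -> det4 (pow4 q k) = 1.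
Proof. by move=> h; elim: k => [|k IH] //; rewrite [pow4 _ _.+1]/= det4M h IH mulr1. Qed.
Lemma det_pow (M : 'M[int]_2) k : det4 (ofM M) = 1 -> \det (M ^+ k) = 1.
Proof. by move=> h; rewrite ofM_det ofM_exp det4_pow. Qed.
Lemma det4_ew ws : det4 (evalword ws) = 1.
Proof. by elim: ws => [|g ws IH] //; rewrite [evalword _]/= det4M IH mulr1; case: g. Qed.
Lemma toM_I : toM I4 = 1.
Proof. by apply: ofM_inj; rewrite ofM_toM ofM_1. Qed.
Lemma toM_S : toM S4 = gen4.
Proof. by []. Qed.
Lemma toM_R : toM R4 = gen6.
Proof. by []. Qed.
Lemma det_g4 : det4 (ofM gen4) = 1. Proof. by rewrite ofM_gen4. Qed.
Lemma det_g6 : det4 (ofM gen6) = 1. Proof. by rewrite ofM_gen6. Qed.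

Lemma G4_pow k X : G4 (mkJ (gen4 ^+ k) X).
Proof. by exists k; rewrite mkJ_M // det_pow // det_g4. Qed.
Lemma G6_pow k X : G6 (mkJ (gen6 ^+ k) X).
Proof. by exists k; rewrite mkJ_M // det_pow // det_g6. Qed.
Lemma G4_1 X : G4 (mkJ 1 X).
Proof. by have := G4_pow 0 X; rewrite expr0. Qed.
Lemma G6_1 X : G6 (mkJ 1 X).
Proof. by have := G6_pow 0 X; rewrite expr0. Qed.
Lemma G2_1 X : G2 (mkJ 1 X).
Proof. by exists 0%N; rewrite mkJ_M ?det1 // expr0. Qed.

Lemma gidem (H : grp) (x : H) : gmul x x = x -> x = gone H.
Proof.
move=> h; have : gmul (ginv x) (gmul x x) = gmul (ginv x) x by rewrite h.
by rewrite gmulA gVmul g1mul.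
Qed.

Definition gpow (H : grp) (x : H) k := iter k (gmul x) (gone H).

Lemma jmul_pow (g : 'M[int]_2) k : det4 (ofM g) = 1 ->
  mkJ (g ^+ k.+1) 0 = jmul (mkJ g 0) (mkJ (g ^+ k) 0).
Proof.
move=> h; apply: jac_eq => /=.
  rewrite !mkJ_M ?det_pow // ?exprS ?mulmxE //.
  by have := det_pow 1 h; rewrite expr1.
by rewrite !mkJ_X mul0mx addr0.
Qed.

Lemma jM_mul x y : jM (jmul x y) = jM x *m jM y. Proof. by []. Qed.
Lemma jX_mul x y : jX (jmul x y) = jX x *m jM y + jX y. Proof. by []. Qed.

Definition nf0 := NF false false [::] B0.
Definition nfof q := epsilon (inhabits nf0) (fun u => evalM u = q).
Lemma nfof_eq u q : evalM u = q -> nfof q = u.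
Proof.
move=> h; have /= e := epsilon_spec (inhabits nf0) (fun u => evalM u = q) (ex_intro _ u h).
by apply: evalM_inj; rewrite /nfof e h.
Qed.

Section Main.
Variable H : grp.
Local Notation "x ** y" := (gmul x y) (at level 40, left associativity).
Local Notation one := (gone H).
Variables f4 f6 : jac -> H.
Hypothesis hom4 : homOnJ G4 f4.
Hypothesis hom6 : homOnJ G6 f6.
Hypothesis agr : forall x, G2 x -> f4 x = f6 x.

Lemma hom4E x y : G4 x -> G4 y -> f4 (jmul x y) = f4 x ** f4 y.
Proof. exact: hom4. Qed.
Lemma hom6E x y : G6 x -> G6 y -> f6 (jmul x y) = f6 x ** f6 y.
Proof. exact: hom6. Qed.

Definition s := f4 (mkJ gen4 0).
Definition p := f6 (mkJ gen6 0).
Definition tau X := f4 (mkJ 1 X).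

Lemma f4_pow k : f4 (mkJ (gen4 ^+ k) 0) = gpow s k.
Proof.
elim: k => [|k IH].
  rewrite expr0 /=; apply: gidem.
  rewrite -(hom4E (G4_1 0) (G4_1 0)). congr f4; apply: jac_eq => /=.
    by rewrite !mkJ_M ?det1 // mulmx1.
  by rewrite !mkJ_X mul0mx addr0.
rewrite jmul_pow ?det_g4 // hom4E ?IH //.
  by have := G4_pow 1 0; rewrite expr1.
exact: G4_pow.
Qed.

Lemma f6_pow k : f6 (mkJ (gen6 ^+ k) 0) = gpow p k.
Proof.
elim: k => [|k IH].
  rewrite expr0 /=; apply: gidem.
  rewrite -(hom6E (G6_1 0) (G6_1 0)); congr f6; apply: jac_eq => /=.
    by rewrite !mkJ_M ?det1 // mulmx1.
  by rewrite !mkJ_X mul0mx addr0.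
rewrite jmul_pow ?det_g6 // hom6E ?IH //.
  by have := G6_pow 1 0; rewrite expr1.
exact: G6_pow.
Qed.

Lemma hsp : s ** s = p ** p ** p.
Proof.
have h1 : s ** s = gpow s 2 by rewrite /= gmul1.
have h2 : p ** p ** p = gpow p 3 by rewrite /= gmul1 !gmulA.
rewrite h1 h2 -f4_pow -f6_pow -gen2_4 -gen2_6; apply: agr.
by exists 1%N; rewrite expr1 mkJ_M // ofM_det ofM_gen2.
Qed.

Lemma hcc : s ** s ** (s ** s) = one.
Proof.
have h1 : s ** s ** (s ** s) = gpow s 4 by rewrite /= gmul1 !gmulA.
rewrite h1 -f4_pow.
have -> : gen4 ^+ 4 = 1 by apply: ofM_inj; rewrite ofM_exp ofM_gen4 ofM_1.
have := f4_pow 0; rewrite expr0 => ->; done.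
Qed.

Definition phi q := evalH s p (nfof q).

Lemma phi_S q : det4 q = 1 -> phi (mul4 S4 q) = s ** phi q.
Proof.
move=> /gen [ws ->]; have [u hu] := nf_exists ws.
rewrite /phi (nfof_eq hu) (@nfof_eq (actS u)) ?evalM_actS ?hu //.
exact: (evalH_actS p hcc u).
Qed.
Lemma phi_R q : det4 q = 1 -> phi (mul4 R4 q) = p ** phi q.
Proof.
move=> /gen [ws ->]; have [u hu] := nf_exists ws.
rewrite /phi (nfof_eq hu) (@nfof_eq (actR u)) ?evalM_actR ?hu //.
exact: (evalH_actR hsp hcc).
Qed.
Lemma phi_I : phi I4 = one.
Proof. by rewrite /phi (@nfof_eq nf0) // evalH_0. Qed.

Lemma phi_powS k : phi (pow4 S4 k) = gpow s k.
Proof. elim: k => [|k IH] /=; first exact: phi_I. by rewrite phi_S ?IH // det4_pow. Qed.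
Lemma phi_powR k : phi (pow4 R4 k) = gpow p k.
Proof. elim: k => [|k IH] /=; first exact: phi_I. by rewrite phi_R ?IH // det4_pow. Qed.

Lemma phi_mul ws r : det4 r = 1 -> phi (mul4 (evalword ws) r) = phi (evalword ws) ** phi r.
Proof.
move=> hr; elim: ws => [|[] ws IH].
- by rewrite mul1_4 phi_I g1mul.
- rewrite -[evalword (true :: ws)]/(mul4 S4 (evalword ws)).
  by rewrite -mul4A !phi_S ?det4M ?det4_ew ?hr // IH gmulA.
- rewrite -[evalword (false :: ws)]/(mul4 R4 (evalword ws)).
  by rewrite -mul4A !phi_R ?det4M ?det4_ew ?hr // IH gmulA.
Qed.

Lemma tau_add X Y : tau (X + Y) = tau X ** tau Y.
Proof.
rewrite /tau -(hom4E (G4_1 X) (G4_1 Y)); congr f4; apply: jac_eq => /=.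
  by rewrite !mkJ_M ?det1 // mulmx1.
by rewrite !mkJ_X mkJ_M ?det1 // mulmx1.
Qed.

Lemma tau6 X : f6 (mkJ 1 X) = tau X.
Proof. by rewrite /tau (agr (G2_1 X)). Qed.

Lemma tau_s X : tau X ** s = s ** tau (X *m gen4).
Proof.
have g41 : G4 (mkJ gen4 0) by have := G4_pow 1 0; rewrite expr1.
rewrite /tau /s -(hom4E (G4_1 X) g41) -(hom4E g41 (G4_1 _)); congr f4; apply: jac_eq => /=.
  by rewrite !mkJ_M ?det1 ?mulmx1 ?mul1mx // ofM_det ofM_gen4.
by rewrite !mkJ_X mul0mx add0r addr0 !mkJ_M // ofM_det ofM_gen4.
Qed.

Lemma tau_p X : tau X ** p = p ** tau (X *m gen6).
Proof.
have g61 : G6 (mkJ gen6 0) by have := G6_pow 1 0; rewrite expr1.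
rewrite -!tau6 /p -(hom6E (G6_1 X) g61) -(hom6E g61 (G6_1 _)); congr f6; apply: jac_eq => /=.
  by rewrite !mkJ_M ?det1 ?mulmx1 ?mul1mx // ofM_det ofM_gen6.
by rewrite !mkJ_X mul0mx add0r addr0 !mkJ_M // ofM_det ofM_gen6.
Qed.

Lemma tau_comm ws X :
  tau X ** phi (evalword ws) = phi (evalword ws) ** tau (X *m toM (evalword ws)).
Proof.
elim: ws X => [|[] ws IH] X.
- by rewrite phi_I toM_I mulmx1 gmul1 g1mul.
- rewrite -[evalword (true :: ws)]/(mul4 S4 (evalword ws)).
  rewrite phi_S ?det4_ew // gmulA tau_s -gmulA IH toM_mul toM_S mulmxA.
  by rewrite gmulA.
- rewrite -[evalword (false :: ws)]/(mul4 R4 (evalword ws)).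
  rewrite phi_R ?det4_ew // gmulA tau_p -gmulA IH toM_mul toM_R mulmxA.
  by rewrite gmulA.
Qed.

Definition F (x : jac) := phi (ofM (jM x)) ** tau (jX x).

Lemma detq (x : jac) : det4 (ofM (jM x)) = 1.
Proof. by rewrite -ofM_det (eqP (jdet x)). Qed.

Lemma F_hom : homOnJ (fun _ => True) F.
Proof.
move=> x y _ _; rewrite /F /= ofM_mul.
have [wx ex] := gen (detq x); have [wy ey] := gen (detq y).
rewrite ex phi_mul -?ey ?detq // tau_add.
have := tau_comm wy (jX x); rewrite -ey toM_ofM => h.
have gg : forall (A B t1 t2 t3 : H), t1 ** B = B ** t2 -> A ** B ** (t2 ** t3) = A ** t1 ** (B ** t3).
  by move=> A B t1 t2 t3 e; rewrite -!gmulA (gmulA t1) e -!gmulA.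
exact: gg.
Qed.

Lemma F_4 x : G4 x -> F x = f4 x.
Proof.
case=> k hk.
have ex : x = jmul (mkJ (gen4 ^+ k) 0) (mkJ 1 (jX x)).
  apply: jac_eq => /=.
    by rewrite !mkJ_M ?det1 ?mulmx1 // det_pow // det_g4.
  by rewrite !mkJ_X mul0mx add0r.
rewrite {2}ex (hom4E (G4_pow k 0) (G4_1 _)) f4_pow /F hk ofM_exp ofM_gen4 phi_powS.
by [].
Qed.

Lemma F_6 x : G6 x -> F x = f6 x.
Proof.
case=> k hk.
have ex : x = jmul (mkJ (gen6 ^+ k) 0) (mkJ 1 (jX x)).
  apply: jac_eq => /=.
    by rewrite !mkJ_M ?det1 ?mulmx1 // det_pow // det_g6.
  by rewrite !mkJ_X mul0mx add0r.
rewrite {2}ex (hom6E (G6_pow k 0) (G6_1 _)) f6_pow /F hk ofM_exp ofM_gen6 phi_powR tau6.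
by [].
Qed.

Lemma F_uniq (F1 F2 : jac -> H) :
  homOnJ (fun _ => True) F1 ->
  (forall x, G4 x -> F1 x = f4 x) -> (forall x, G6 x -> F1 x = f6 x) ->
  homOnJ (fun _ => True) F2 ->
  (forall x, G4 x -> F2 x = f4 x) -> (forall x, G6 x -> F2 x = f6 x) ->
  forall z, F1 z = F2 z.
Proof.
move=> h1 a1 b1 h2 a2 b2.
have key : forall ws, F1 (mkJ (toM (evalword ws)) 0) = F2 (mkJ (toM (evalword ws)) 0).
  elim=> [|g ws IH].
    by rewrite toM_I (a1 _ (G4_1 0)) (a2 _ (G4_1 0)).
  have dW := det_toM (det4_ew ws).
  case: g.
    rewrite -[evalword (true :: ws)]/(mul4 S4 (evalword ws)).
    have e : mkJ (toM (mul4 S4 (evalword ws))) 0 = jmul (mkJ gen4 0) (mkJ (toM (evalword ws)) 0).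
      apply: jac_eq; rewrite ?jM_mul ?jX_mul.
        rewrite !mkJ_M ?toM_mul ?toM_S //.
        all: try by rewrite ofM_det ofM_gen4.
        all: try by rewrite det_mulmx dW mulr1 ofM_det ofM_gen4.
      by rewrite !mkJ_X mul0mx addr0.
    have g41 : G4 (mkJ gen4 0) by have := G4_pow 1 0; rewrite expr1.
    by rewrite e (h1 _ _ I I) (h2 _ _ I I) (a1 _ g41) (a2 _ g41) IH.
  rewrite -[evalword (false :: ws)]/(mul4 R4 (evalword ws)).
  have e : mkJ (toM (mul4 R4 (evalword ws))) 0 = jmul (mkJ gen6 0) (mkJ (toM (evalword ws)) 0).
    apply: jac_eq; rewrite ?jM_mul ?jX_mul.
      rewrite !mkJ_M ?toM_mul ?toM_R //.
      all: try by rewrite ofM_det ofM_gen6.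
      all: try by rewrite det_mulmx dW mulr1 ofM_det ofM_gen6.
    by rewrite !mkJ_X mul0mx addr0.
  have g61 : G6 (mkJ gen6 0) by have := G6_pow 1 0; rewrite expr1.
  by rewrite e (h1 _ _ I I) (h2 _ _ I I) (b1 _ g61) (b2 _ g61) IH.
move=> z.
have [ws ew] := gen (detq z).
have ez : z = jmul (mkJ (toM (evalword ws)) 0) (mkJ 1 (jX z)).
  apply: jac_eq => /=.
    by rewrite !mkJ_M ?det1 ?mulmx1 -?ew ?toM_ofM // -(eqP (jdet z)).
  by rewrite !mkJ_X mul0mx add0r.
by rewrite ez (h1 _ _ I I) (h2 _ _ I I) key (a1 _ (G4_1 _)) (a2 _ (G4_1 _)).
Qed.

End Main.

Theorem lemma6 :
  (forall x, G2 x -> G4 x) /\ (forall x, G2 x -> G6 x) /\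
  exists j4 j6 : jac -> jac, is_amalgam j4 j6.
Proof.
split.
  by move=> x [k hk]; exists (2 * k)%N; rewrite hk gen2_4 exprM.
split.
  by move=> x [k hk]; exists (3 * k)%N; rewrite hk gen2_6 exprM.
exists (fun x => x), (fun x => x); split; first by [].
split; first by [].
split; first by [].
move=> H f4 f6 h4 h6 hag; split.
  exists (F f4 f6); split; first exact: F_hom.
  split; [exact: F_4 | exact: F_6].
exact: F_uniq.
Qed.
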